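(* Let $D_\infty=\langle s,t\mid t^2,\ tsts\rangle$ with word metric $d(g_1,g_2)=|g_2g_1^{-1}|_S$ for $S=\{s^{\pm1},t\}$. Let $\alpha,\beta$ be minimal continuous actions of $D_\infty$ on an infinite compact Hausdorff space $X$, and suppose they are continuously orbit equivalent via a homeomorphism $\phi:X\to X$ and continuous cocycle $c:D_\infty\times X\to D_\infty$ with $\phi(\alpha_g x)=\beta_{c(g,x)}(\phi(x))$ for all $g,x$. Define $X_+=\{x\in X: \sup_{n\in\mathbb{Z}} d(c(s^n,x),s^n)<\infty\}$ and $X_-=\{x\in X: \sup_{n\in\mathbb{Z}} d(c(s^n,x),s^{-n})<\infty\}$. Then $X=X_+\sqcup X_-$ and both $X_+$ and $X_-$ are clopen in $X$.
   Context: Continuous orbit equivalence of two actions of $D_\infty$ on $X$: a homeomorphism $\phi:X\to X$ with inverse $\psi$ and continuous maps $a,b:D_\infty\times X\to D_\infty$ with $\phi(\alpha_g x)=\beta_{a(g,x)}\phi(x)$ and $\psi(\beta_h y)=\alpha_{b(h,y)}\psi(y)$; since the actions are topologically free, $a=c$ is a cocycle, i.e. $c(g_1g_2,x)=c(g_1,\alpha_{g_2}x)c(g_2,x)$. *)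

(* Defs.v *)
From HB Require Import structures.
From mathcomp Require Import all_boot all_order all_algebra.
From mathcomp Require Import all_classical all_reals all_analysis.
Set Implicit Arguments. Unset Strict Implicit. Unset Printing Implicit Defensive.
Import Order.TTheory GRing.Theory Num.Theory.
Local Open Scope ring_scope.

(* The infinite dihedral group D_oo = < s, t | t^2, tsts >.
   Every element has a unique normal form s^n t^b (n : int, b : bool);
   we use these normal forms as the carrier. *)
Definition Dinf := (int * bool)%type.

Definition dmul (g h : Dinf) : Dinf :=
  (g.1 + (if g.2 then - h.1 else h.1), g.2 (+) h.2).
Definition dinv (g : Dinf) : Dinf := if g.2 then g else (- g.1, false).
Definition d1 : Dinf := (0, false).

Definition ds : Dinf := (1, false).
Definition dt : Dinf := (0, true).
Definition dspow (n : int) : Dinf := (n, false).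

Inductive gen := GS | GSinv | GT.
Definition gen_val (a : gen) : Dinf :=
  match a with GS => ds | GSinv => dinv ds | GT => dt end.
Definition eval_word (w : seq gen) : Dinf :=
  foldr (fun a g => dmul (gen_val a) g) d1 w.

Lemma eval_nseqS (k : nat) (w : seq gen) :
  eval_word (nseq k GS ++ w) = dmul (k%:Z, false) (eval_word w).
Proof.
elim: k => [|k IH] /=.
  by rewrite /dmul /= add0r; case: (eval_word w).
rewrite IH /dmul /=; congr (_, _); by rewrite addrA -PoszD add1n.
Qed.

Lemma eval_nseqSinv (k : nat) (w : seq gen) :
  eval_word (nseq k GSinv ++ w) = dmul (- k%:Z, false) (eval_word w).
Proof.
elim: k => [|k IH] /=.
  by rewrite /dmul /= oppr0 add0r; case: (eval_word w).
rewrite IH /dmul /=; congr (_, _).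
by rewrite addrA -opprD -PoszD add1n.
Qed.

Lemma word_exists0 (g : Dinf) : exists n, exists w : seq gen,
  size w = n /\ eval_word w = g.
Proof.
case: g => n b.
pose tw := if b then [:: GT] else [::].
have Htw : eval_word tw = (0, b).
  by rewrite /tw; case: (b) => //=; rewrite /dmul /= oppr0 addr0.
case: (lerP 0 n) => Hn.
  exists (size (nseq `|n|%N GS ++ tw)), (nseq `|n|%N GS ++ tw); split => //.
  by rewrite eval_nseqS Htw /dmul /= addr0 gez0_abs.
exists (size (nseq `|n|%N GSinv ++ tw)), (nseq `|n|%N GSinv ++ tw); split => //.
by rewrite eval_nseqSinv Htw /dmul /= addr0 ltz0_abs // opprK.
Qed.

Definition represented_by_word_of_length (g : Dinf) (n : nat) : bool :=
  `[< exists w : seq gen, size w = n /\ eval_word w = g >].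

Lemma word_exists (g : Dinf) : exists n, represented_by_word_of_length g n.
Proof.
by have [n Hn] := word_exists0 g; exists n; apply/asboolP.
Qed.

Definition wordlen (g : Dinf) : nat := ex_minn (word_exists g).

Definition dmetric (g1 g2 : Dinf) : nat := wordlen (dmul g2 (dinv g1)).

Local Open Scope classical_set_scope.

Definition is_cont_action (X : topologicalType) (a : Dinf -> X -> X) : Prop :=
  (forall x, a d1 x = x) /\
  (forall g h x, a (dmul g h) x = a g (a h x)) /\
  (forall g, continuous (a g)).

Definition minimal_action (X : topologicalType) (a : Dinf -> X -> X) : Prop :=
  forall x, closure [set a g x | g in [set: Dinf]] = [set: X].

(* continuity of a map D_oo x X -> D_oo, D_oo being discrete:
   for each g, x |-> c g x is locally constant *)
Definition cont_DX (X : topologicalType) (c : Dinf -> X -> Dinf) : Prop :=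
  forall g x, \forall y \near x, c g y = c g x.

(* Main.v *)
Require Import Defs.
From HB Require Import structures.
From mathcomp Require Import all_boot all_order all_algebra.
From mathcomp Require Import all_classical all_reals all_analysis.
From mathcomp Require Import zify ring lra.
Import Order.TTheory GRing.Theory Num.Theory.
Local Open Scope classical_set_scope.

Module Helpers9.
Local Set Implicit Arguments. Local Unset Strict Implicit.
Local Open Scope ring_scope.
Local Notation dinv := Defs.dinv.
Local Notation dmul := Defs.dmul.
Local Notation d1 := Defs.d1.

Lemma dmulA (g h k : Dinf) : dmul g (dmul h k) = dmul (dmul g h) k.
Proof.
case: g h k => [g1 g2] [h1 h2] [k1 k2]; rewrite /dmul /=.
by case: g2; case: h2; case: k2 => /=; congr pair; lia.
Qed.

Lemma dmul1g g : dmul d1 g = g.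
Proof. by case: g => g1 g2; rewrite /dmul /= add0r. Qed.

Lemma dmulg1 g : dmul g d1 = g.
Proof. by case: g => g1 [|]; rewrite /dmul /= ?oppr0 addr0. Qed.

Lemma dmulVg g : dmul (dinv g) g = d1.
Proof. by case: g => g1 [|]; rewrite /dmul /dinv /d1 /=; congr pair; lia. Qed.

Lemma dmulgV g : dmul g (dinv g) = d1.
Proof. by case: g => g1 [|]; rewrite /dmul /dinv /d1 /=; congr pair; lia. Qed.

Lemma dmulKg g h : dmul (dinv g) (dmul g h) = h.
Proof. by rewrite dmulA dmulVg dmul1g. Qed.

Lemma dmulgK g h : dmul (dmul h g) (dinv g) = h.
Proof. by rewrite -dmulA dmulgV dmulg1. Qed.

Lemma dmul_inj g : injective (dmul g).
Proof. by move=> h k E; rewrite -(dmulKg g h) E dmulKg. Qed.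

Lemma dmul_injr g : injective (fun h => dmul h g).
Proof. by move=> h k E; rewrite -(dmulgK g h) /= E dmulgK. Qed.

Definition kap (g : Dinf) : int := if g.2 then - g.1 else g.1.

Lemma kap_mulE h g : kap (dmul h g) = kap g + (if h.2 (+) g.2 then - h.1 else h.1).
Proof.
case: h g => [h1 h2] [g1 g2]; rewrite /kap /dmul /=.
by case: h2; case: g2 => /=; lia.
Qed.

Lemma kap_mul h g : `|kap (dmul h g) - kap g| = `|h.1|.
Proof.
rewrite kap_mulE addrC addKr; case: (_ (+) _) => //; exact: normrN.
Qed.

Lemma kap_diff g1 g2 : `|(dmul g2 (dinv g1)).1| = `|kap g2 - kap g1|.
Proof.
case: g1 g2 => [a1 b1] [a2 b2]; rewrite /kap /dmul /dinv /=.
by case: b1; case: b2 => /=; lia.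
Qed.

Definition pot (g : Dinf) : nat := (`|g.1|%N + g.2)%N.

Lemma pot_eval w : (pot (eval_word w) <= size w)%N.
Proof.
elim: w => [|a w IH] /=; first by rewrite /pot /=.
move: IH; case: (eval_word w) => m e; rewrite /pot.
case: a; rewrite /= /dmul /=; case: e => /=; lia.
Qed.

Lemma word_size (g : Dinf) : exists w, size w = pot g /\ eval_word w = g.
Proof.
case: g => n b.
pose tw := if b then [:: GT] else [::].
have Htw : eval_word tw = (0, b).
  by rewrite /tw; case: (b) => //=; rewrite /dmul /= oppr0 addr0.
have Hs : size tw = b by rewrite /tw; case: (b).
case: (lerP 0 n) => Hn.
  exists (nseq `|n|%N GS ++ tw); rewrite size_cat size_nseq Hs; split => //.
  by rewrite eval_nseqS Htw /dmul /= addr0 gez0_abs.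
exists (nseq `|n|%N GSinv ++ tw); rewrite size_cat size_nseq Hs; split => //.
by rewrite eval_nseqSinv Htw /dmul /= addr0 ltz0_abs // opprK.
Qed.

Lemma wordlenE g : wordlen g = pot g.
Proof.
rewrite /wordlen; case: ex_minnP => m /asboolP [w [Hw Ew]] Hmin.
apply/eqP; rewrite eqn_leq; apply/andP; split.
  have [w' [Hs He]] := word_size g.
  by rewrite -Hs; apply: Hmin; apply/asboolP; exists w'.
by rewrite -Hw -Ew pot_eval.
Qed.

Lemma dmetricE g1 g2 :
  dmetric g1 g2 = (`|kap g2 - kap g1|%N + (g1.2 (+) g2.2))%N.
Proof.
rewrite /dmetric wordlenE /pot.
case: g1 g2 => [a1 b1] [a2 b2]; rewrite /kap /dmul /dinv /=.
case: b1; case: b2 => /=; lia.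
Qed.

Definition win (a : int) (len : nat) : seq Dinf :=
  [seq (a + k%:Z, false) | k <- iota 0 len] ++
  [seq (-(a + k%:Z), true) | k <- iota 0 len].

Lemma mem_win a len g : (g \in win a len) = (a <= kap g < a + len%:Z).
Proof.
case: g => m e; rewrite /win mem_cat /kap /=.
apply/idP/idP.
  case/orP => /mapP [k]; rewrite mem_iota add0n => Hk [-> ->]; lia.
move=> H; case: e H => /= H; apply/orP; [right|left]; apply/mapP.
  exists `|- m - a|%N; first by rewrite mem_iota; lia.
  congr pair; lia.
exists `|m - a|%N; first by rewrite mem_iota; lia.
congr pair; lia.
Qed.

Lemma uniq_win a len : uniq (win a len).
Proof.
rewrite /win cat_uniq; apply/and3P; split.
- rewrite map_inj_uniq ?iota_uniq //.
  by move=> k k' [] /eqP; rewrite (inj_eq (addrI _)) => /eqP [].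
- apply/hasPn => g /mapP [k _ ->]; apply/mapP => [[k' _]] //.
- rewrite map_inj_uniq ?iota_uniq //.
  by move=> k k' [] /eqP; rewrite eqr_opp (inj_eq (addrI _)) => /eqP [].
Qed.

Lemma size_win a len : size (win a len) = (len + len)%N.
Proof. by rewrite size_cat !size_map size_iota. Qed.

Lemma inj_count (f : Dinf -> Dinf) a n a' n' : injective f ->
  (forall g, g \in win a n -> f g \in win a' n') -> (n <= n')%N.
Proof.
move=> fi H.
have U : uniq (map f (win a n)) by rewrite map_inj_uniq // uniq_win.
have S : {subset map f (win a n) <= win a' n'}.
  by move=> y /mapP [g Hg ->]; apply: H.
have := uniq_leq_size U S; rewrite size_map !size_win; lia.
Qed.

Lemma surj_count (f : Dinf -> Dinf) a n a' n' : (forall y, exists g, f g = y) ->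
  (forall g, f g \in win a' n' -> g \in win a n) -> (n' <= n)%N.
Proof.
move=> fs H.
have S : {subset win a' n' <= map f (win a n)}.
  move=> y Hy; have [g Hg] := fs y; apply/mapP; exists g => //.
  by apply: H; rewrite Hg.
have := uniq_leq_size (uniq_win a' n') S; rewrite size_map !size_win; lia.
Qed.

Definition qf (th : Dinf -> Dinf) (n : int) : int := kap (th (n, false)).

Definition good_map (L : nat) (th : Dinf -> Dinf) : Prop :=
  [/\ injective th, (forall y, exists g, th g = y),
      (forall g, `|kap (th g) - qf th (kap g)| <= L%:Z),
      (forall n, `|qf th (n + 1) - qf th n| <= L%:Z) &
      (forall g1 g2, `|kap g2 - kap g1| <= L%:Z * (`|kap (th g2) - kap (th g1)| + 1))]
  /\ qf th 0 = 0 /\ (0 < L)%N.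

Definition Kc (L : nat) : nat := (L * (2 * L + 2))%N.
Definition Dc (L : nat) : nat := (Kc L * (L + 1 + Kc L * L))%N.
Definition Mc (L : nat) : nat := (2 * Dc L + Kc L * L + 1)%N.

Lemma lip_low L th : good_map L th -> forall n (i : nat),
  qf th n - (i * L)%N%:Z <= qf th (n + i%:Z).
Proof.
move=> [[_ _ _ hB _] _] n; elim=> [|i IH].
  by rewrite addr0 (_ : n + 0%:Z = n) // addr0.
have := hB (n + i%:Z); rewrite mulSn -addn1.
rewrite [Posz (i + 1)]PoszD addrA; move: IH; set u := (i * L)%N.
rewrite (_ : n + i%:Z + 1%:Z = n + i%:Z + 1) //; lia.
Qed.

Lemma delta_big L th : good_map L th -> forall n,
  (2 * L + 1)%N%:Z <= `|qf th (n + (Kc L)%:Z) - qf th n|.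
Proof.
move=> [[_ _ _ _ hC] [_ L0]] n.
have := hC (n, false) (n + (Kc L)%:Z, false).
change (kap (th (n, false))) with (qf th n).
change (kap (th (n + (Kc L)%:Z, false))) with (qf th (n + (Kc L)%:Z)).
rewrite /kap /= (_ : n + (Kc L)%:Z - n = (Kc L)%:Z); last by ring.
rewrite ger0_norm // /Kc PoszM ler_pM2l; last by rewrite ltz_nat.
lia.
Qed.

Definition Dl L th (n : int) := qf th (n + (Kc L)%:Z) - qf th n.

Lemma delta_step L th : good_map L th -> forall n,
  (0 < Dl L th n) = (0 < Dl L th (n + 1)).
Proof.
move=> G n; have [[_ _ _ hB _] _] := G.
have h1 := hB n; have h2 := hB (n + (Kc L)%:Z).
have d1 := delta_big G n; have d2 := delta_big G (n + 1).
move: h1 h2 d1 d2; rewrite /Dl (addrAC n 1).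
clear hB G.
set a := qf th (n + Kc L). set b := qf th n. set c := qf th (n + Kc L + 1). set d := qf th (n + 1).
move=> h1 h2 h3 h4; clearbody a b c d; apply/idP/idP; lia.
Qed.

Lemma delta_all L th : good_map L th -> 0 < Dl L th 0 -> forall n, 0 < Dl L th n.
Proof.
move=> G H0.
have Hp : forall k : nat, 0 < Dl L th k.
  elim=> // k IH; by rewrite -addn1 PoszD -delta_step.
have Hn : forall k : nat, 0 < Dl L th (- k%:Z).
  elim=> // k IH; rewrite (delta_step G) -addn1 PoszD opprD -addrA addNr addr0 //.
by case=> k; [apply: Hp | rewrite NegzE; apply: Hn].
Qed.

Lemma mono1 L th : good_map L th -> (forall n, 0 < Dl L th n) ->
  forall (j i : nat) n,
  qf th n + ((j * (2 * L + 1))%N)%:Z - ((i * L)%N)%:Z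
    <= qf th (n + ((j * Kc L + i)%N)%:Z).
Proof.
move=> G Hp; elim=> [|j IH] i n.
  by rewrite !mul0n add0n addr0; apply: lip_low.
have := IH i (n + (Kc L)%:Z); have := Hp n; have := delta_big G n.
rewrite /Dl !mulSn -!addnA [Posz (Kc L + _)]PoszD addrA.
set a := qf th (n + (Kc L)%:Z); set b := qf th n.
set c := qf th (n + (Kc L)%:Z + _).
rewrite !PoszD; clearbody a b c; lia.
Qed.

Lemma Kc_gt0 L : (0 < L)%N -> (0 < Kc L)%N.
Proof. by move=> L0; rewrite /Kc muln_gt0 L0 addn2. Qed.

Lemma mono2 L th : good_map L th -> (forall n, 0 < Dl L th n) ->
  forall n (d : nat),
  qf th n - ((Kc L * L)%N)%:Z <= qf th (n + d%:Z) /\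
  ((Dc L <= d)%N -> qf th n + (L + 1)%N%:Z <= qf th (n + d%:Z)).
Proof.
move=> G Hp n d; have [_ [_ L0]] := G.
have K0 := Kc_gt0 L0.
have E := divn_eq d (Kc L).
have Hi : (d %% Kc L < Kc L)%N by rewrite ltn_pmod.
have := mono1 G Hp (d %/ Kc L) (d %% Kc L) n; rewrite -E.
have H1 : (d %% Kc L * L <= Kc L * L)%N by rewrite leq_mul2r ltnW ?orbT.
have H2 : (d %/ Kc L <= d %/ Kc L * (2 * L + 1))%N by rewrite leq_pmulr // addn1.
have H3 : (Dc L <= d)%N -> (L + 1 + Kc L * L <= d %/ Kc L)%N.
  by move=> Hd; rewrite leq_divRL // mulnC.
move: H1 H2 H3; set j := (d %/ Kc L)%N; set i := (d %% Kc L)%N.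
set x := (i * L)%N; set y := (Kc L * L)%N; set z := (j * (2 * L + 1))%N.
clearbody j i x y z; move=> H1 H2 H3 H; split; first lia.
move=> /H3; lia.
Qed.

Lemma core_pos L th : good_map L th -> (forall n, 0 < Dl L th n) ->
  forall n : nat, `|qf th n%:Z - n%:Z| <= (Mc L)%:Z.
Proof.
move=> G Hp n; have [[thi ths hA _ _] [h0 L0]] := G.
have M2 := mono2 G Hp.
set v := qf th n%:Z.
have Hlow : n%:Z - (2 * Dc L)%N%:Z - (Kc L * L)%N%:Z <= v.
  case: (ltnP n (2 * Dc L)) => Hn.
    have [+ _] := M2 0 n; rewrite add0r h0 -/v; lia.
  have [_ +] := M2 0 n; rewrite add0r h0 -/v => /(_ (leq_trans _ Hn)).
  move=> /(_ _) Hv; have {}Hv : (L + 1)%N%:Z <= v by apply: Hv; lia.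
  have := @inj_count th (Dc L)%:Z (n - 2 * Dc L)%N 0 `|v|%N thi.
  suff H : forall g, g \in win (Dc L)%:Z (n - 2 * Dc L) -> th g \in win 0 `|v|.
    move=> /(_ H); lia.
  move=> g; rewrite !mem_win add0r => /andP [k1 k2].
  set k := kap g in k1 k2 *.
  have hk := hA g; rewrite -/k in hk.
  have [_ +] := M2 0 `|k|%N; rewrite add0r h0 => /(_ _) Hq1.
  have {}Hq1 : (L + 1)%N%:Z <= qf th `|k|%N by apply: Hq1; lia.
  rewrite (_ : `|k|%N%:Z = k) in Hq1; last lia.
  have [_ +] := M2 k `|n%:Z - k|%N => /(_ _) Hq2.
  have {}Hq2 : qf th k + (L + 1)%N%:Z <= qf th (k + `|n%:Z - k|%N%:Z).
    by apply: Hq2; lia.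
  rewrite (_ : k + `|n%:Z - k|%N%:Z = n) -/v in Hq2; last lia.
  move: hk Hq1 Hq2 Hv; set w := kap (th g); set u := qf th k.
  clearbody w u v; lia.
have Hup : v <= n%:Z + (2 * Dc L + 1)%N%:Z.
  case: (lerP v 0) => Hv0; first lia.
  have := @surj_count th (- (Dc L)%:Z) (n + 2 * Dc L + 1)%N 0 `|v|%N ths.
  suff H : forall g, th g \in win 0 `|v| -> g \in win (- (Dc L)%:Z) (n + 2 * Dc L + 1).
    move=> /(_ H); lia.
  move=> g; rewrite !mem_win add0r => /andP [k1 k2].
  set k := kap g; have hk := hA g; rewrite -/k in hk.
  move: k1 k2 hk; set w := kap (th g) => k1 k2 hk.
  apply/andP; split; [rewrite leNgt | rewrite ltNge]; apply/negP => Hk.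
    have [_ +] := M2 k `|- k|%N => /(_ _) Hq.
    have {}Hq : qf th k + (L + 1)%N%:Z <= qf th (k + `|- k|%N%:Z) by apply: Hq; lia.
    rewrite (_ : k + `|- k|%N%:Z = 0) ?h0 in Hq; last lia.
    move: Hq hk k1; set u := qf th k; clearbody u w; lia.
  have [_ +] := M2 n `|k - n%:Z|%N => /(_ _) Hq.
  have {}Hq : qf th n + (L + 1)%N%:Z <= qf th (n%:Z + `|k - n%:Z|%N%:Z) by apply: Hq; lia.
  rewrite (_ : n%:Z + `|k - n%:Z|%N%:Z = k) -/v in Hq; last lia.
  move: Hq hk k2; set u := qf th k; clearbody u w v; lia.
rewrite /Mc; move: Hlow Hup; clearbody v; lia.
Qed.

Definition negG (g : Dinf) : Dinf := (- g.1, g.2).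

Lemma kap_negG g : kap (negG g) = - kap g.
Proof. by case: g => m [] //=; rewrite /kap /=. Qed.

Lemma negGK : involutive negG.
Proof. by case=> m e; rewrite /negG /= opprK. Qed.

Lemma negG_inj : injective negG.
Proof. exact: inv_inj negGK. Qed.

Lemma qf_negl th n : qf (negG \o th) n = - qf th n.
Proof. by rewrite /qf /= kap_negG. Qed.

Lemma qf_conj th n : qf (negG \o th \o negG) n = - qf th (- n).
Proof. by rewrite /qf /= kap_negG. Qed.

Lemma absNN (x y : int) : `|- x - - y| = `|x - y|.
Proof. by rewrite -opprD normrN. Qed.

Lemma good_negl L th : good_map L th -> good_map L (negG \o th).
Proof.
move=> [[thi ths hA hB hC] [h0 L0]]; split; last first.
  by split => //; rewrite qf_negl h0.
split.
- by move=> x y /= /negG_inj /thi.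
- by move=> y; have [g Hg] := ths (negG y); exists g => /=; rewrite Hg negGK.
- by move=> g; rewrite qf_negl /= kap_negG; have := hA g; lia.
- by move=> n; rewrite !qf_negl; have := hB n; lia.
- by move=> g1 g2 /=; rewrite !kap_negG absNN.
Qed.

Lemma good_conj L th : good_map L th -> good_map L (negG \o th \o negG).
Proof.
move=> [[thi ths hA hB hC] [h0 L0]]; split; last first.
  by split => //; rewrite qf_conj oppr0 h0.
split.
- by move=> x y /= /negG_inj /thi /negG_inj.
- move=> y; have [g Hg] := ths (negG y); exists (negG g) => /=.
  by rewrite negGK Hg negGK.
- move=> g; rewrite qf_conj /= kap_negG; have := hA (negG g).
  by rewrite kap_negG; lia.
- move=> n; rewrite !qf_conj (_ : - (n + 1) = - n - 1); last by ring.
  have := hB (- n - 1); rewrite (_ : - n - 1 + 1 = - n); last by ring.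
  lia.
- move=> g1 g2 /=; rewrite !kap_negG; have := hC (negG g1) (negG g2).
  by rewrite !kap_negG !absNN.
Qed.

Lemma core_posall L th : good_map L th -> 0 < Dl L th 0 ->
  forall n : int, `|qf th n - n| <= (Mc L)%:Z.
Proof.
move=> G H0; have Hp := delta_all G H0.
case=> k; first exact: core_pos G Hp k.
have G' := good_conj G.
have Hp' : forall n, 0 < Dl L (negG \o th \o negG) n.
  move=> n; rewrite /Dl !qf_conj; have := Hp (- n - (Kc L)%:Z).
  rewrite /Dl (_ : - n - (Kc L)%:Z + (Kc L)%:Z = - n); last by ring.
  rewrite opprD; set a := qf th (- n); set b := qf th (- n - _).
  by clearbody a b; lia.
have := core_pos G' Hp' k.+1; rewrite qf_conj NegzE; lia.
Qed.

Lemma core_all L th : good_map L th ->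
  (forall n : int, `|qf th n - n| <= (Mc L)%:Z) \/
  (forall n : int, `|qf th n + n| <= (Mc L)%:Z).
Proof.
move=> G; have := delta_big G 0; rewrite -/(Dl L th 0).
case: (ltrgt0P (Dl L th 0)) => H.
- by left; apply: core_posall.
- right => n; have G1 := good_negl G.
  have : 0 < Dl L (negG \o th) 0 by rewrite /Dl !qf_negl; move: H; rewrite /Dl; lia.
  move=> /(core_posall G1) /(_ n); rewrite qf_negl; lia.
- by move: H; rewrite /Dl; set a := qf th _; set b := qf th 0; clearbody a b; lia.
Qed.

Lemma cover_nat (X : topologicalType) (P : nat -> X -> Prop) :
  compact [set: X] ->
  (forall x : X, exists n0, exists2 U : set X, nbhs x U &
      forall y m, U y -> (n0 <= m)%N -> P m y) ->
  exists n, forall y, P n y.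
Proof.
move=> /compact_near_coveringP cX H.
have := cX nat \oo P _.
move=> /(_ _) [].
  move=> x _; have [n0 [U Ux HU]] := H x.
  exists (U, [set m | (n0 <= m)%N]); first by split => //; exists n0.
  by move=> [y m] [/= Uy Hm]; apply: HU.
move=> N _ HN; exists N => y; exact: (HN N (leqnn N) y I).
Qed.

Lemma loc_bound (X : topologicalType) (f : X -> Dinf) : compact [set: X] ->
  (forall x, \forall y \near x, f y = f x) -> exists N : nat, forall y, (`|(f y).1| <= N)%N.
Proof.
move=> cX Hf; apply: (cover_nat cX) => x.
exists `|(f x).1|%N; exists [set y | f y = f x]; first exact: Hf.
by move=> y m /= ->.
Qed.

Lemma act_comp (X : topologicalType) (a : Dinf -> X -> X) : is_cont_action a ->
  forall g h x, a g (a h x) = a (dmul g h) x.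
Proof. by move=> [_ [aM _]] g h x; rewrite aM. Qed.

Lemma act_invK (X : topologicalType) (a : Dinf -> X -> X) : is_cont_action a ->
  forall g x, a (dinv g) (a g x) = x.
Proof. by move=> A g x; rewrite (act_comp A) dmulVg; case: A. Qed.

Lemma act_Kinv (X : topologicalType) (a : Dinf -> X -> X) : is_cont_action a ->
  forall g x, a g (a (dinv g) x) = x.
Proof. by move=> A g x; rewrite (act_comp A) dmulgV; case: A. Qed.

Lemma act_inj (X : topologicalType) (a : Dinf -> X -> X) : is_cont_action a ->
  forall g, injective (a g).
Proof. by move=> A g x y E; rewrite -(act_invK A g x) E act_invK. Qed.

Lemma finite_closure (X : topologicalType) (A : set X) : hausdorff_space X ->
  finite_set A -> closure A = A.
Proof.
move=> hX fA; have := (@accessible_finite_set_closed X).1 (hausdorff_accessible hX) A fA.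
by move/closure_id.
Qed.

Lemma per_mult (X : topologicalType) (a : Dinf -> X -> X) : is_cont_action a ->
  forall k y, a (k, false) y = y -> forall q : int, a (q * k, false) y = y.
Proof.
move=> A k y Hy.
have Hp : forall j : nat, a (j%:Z * k, false) y = y.
  elim=> [|j IH]; first by rewrite mul0r; case: A.
  rewrite -{2}Hy -{2}IH (act_comp A) /dmul /=; congr (a (_, _) y).
  by rewrite -addn1 PoszD mulrDl mul1r addrC.
case=> j; first exact: Hp.
have E := act_invK A (j.+1%:Z * k, false) y.
by move: E; rewrite (Hp j.+1) /dinv /= NegzE mulNr.
Qed.

Lemma sfree (X : topologicalType) (a : Dinf -> X -> X) : is_cont_action a ->
  hausdorff_space X -> minimal_action a -> infinite_set [set: X] ->
  forall k x, a (k, false) x = x -> k = 0.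
Proof.
move=> A hX Mn Inf k x Hk; case: (k =P 0) => // /eqP k0; exfalso; apply: Inf.
have Hper : forall e : bool, a (k, false) (a (0, e) x) = a (0, e) x.
  case; last by rewrite (_ : (0, false) = d1) //; case: A => -> _.
  rewrite (act_comp A) /dmul /= addr0.
  have Hm : a (- k, false) x = x.
    by have := per_mult A Hk (-1); rewrite mulN1r.
  by rewrite -{2}Hm (act_comp A) /dmul /= opprK add0r.
pose f := fun p : 'I_`|k|%N * bool => a ((p.1 : nat)%:Z, false) (a (0, p.2) x).
apply: (@sub_finite_set _ _ (range f)); last exact/finite_image/finite_finset.
move=> y _; have : closure [set a g x | g in [set: Dinf]] y by rewrite Mn.
rewrite -(finite_closure hX (finite_image f (@finite_finset _ [set: 'I_`|k|%N * bool]))).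
apply: closureS => _ [[m e] _ <-].
have Hlt : (`|(m %% k)%Z|%N < `|k|%N)%N.
  have := ltz_mod m k0; have := modz_ge0 m k0; lia.
exists (Ordinal Hlt, e) => //=.
rewrite /f /= (_ : `|(m %% k)%Z|%N%:Z = (m %% k)%Z); last first.
  by have := modz_ge0 m k0; lia.
rewrite -(per_mult A (Hper e) (m %/ k)%Z) (act_comp A) (act_comp A) /dmul /=.
by rewrite addr0 addrC -divz_eq.
Qed.

Lemma open_pre (X : topologicalType) (f : X -> X) (U : set X) :
  continuous f -> open U -> open (f @^-1` U).
Proof. by move=> fc oU; apply: open_comp => // y _; apply: fc. Qed.

Lemma orbit_fixed (X : topologicalType) (a : Dinf -> X -> X) : is_cont_action a ->
  forall k x, a (k, true) x = x -> forall g, exists j, a g x = a (j, false) x.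
Proof.
move=> A k x Hx [m []]; last by exists m.
exists (m - k); rewrite -{1}Hx (act_comp A) /dmul /=; congr (a (_, _) x); ring.
Qed.

Lemma fix_nowhere (X : topologicalType) (a : Dinf -> X -> X) : is_cont_action a ->
  compact [set: X] -> hausdorff_space X -> minimal_action a ->
  infinite_set [set: X] ->
  forall k (U : set X), open U -> (forall y, U y -> a (k, true) y = y) -> U = set0.
Proof.
move=> A cX hX Mn Inf k U oU HU; apply/eqP/negPn/negP => /set0P [x Ux].
have Hx := HU x Ux.
have [[j j0 Uj]|] := pselect (exists2 j, j != 0 & U (a (j, false) x)).
  have Hy := HU _ Uj.
  have E1 : a (k - 2 * j, true) x = x.
    have := congr1 (a (- j, false)) Hy.
    rewrite (act_comp A) (act_comp A) /dmul /= (_ : - j + k - j = k - 2 * j); last by ring.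
    by move=> ->; exact: (act_invK A (j, false) x).
  have E2 : a (2 * j, false) x = x.
    have := congr1 (a (k, true)) E1; rewrite Hx (act_comp A) /dmul /=.
    by rewrite (_ : k - (k - 2 * j) = 2 * j); last ring.
  have := sfree A hX Mn Inf E2; move/eqP: j0; lia.
move=> Hno.
have Hj : forall j, U (a (j, false) x) -> j = 0.
  by move=> j Uj; case: (j =P 0) => // /eqP j0; exfalso; apply: Hno; exists j.
have U1 : forall z, U z -> z = x.
  move=> z Uz; apply: contrapT => zx.
  have oV : open (U `&` ~` [set x]).
    apply: openI => //; apply: closed_openC.
    exact: accessible_closed_set1 (hausdorff_accessible hX) x.
  have : closure [set a g x | g in [set: Dinf]] z by rewrite Mn.
  move=> /(_ _ (open_nbhs_nbhs (conj oV (conj Uz zx)))) [_ [[g _ <-] [Ug ng]]].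
  have [j Ej] := orbit_fixed A Hx g; rewrite Ej in Ug ng.
  apply: ng; rewrite (Hj _ Ug) /=; rewrite (_ : (0, false) = d1) //; by case: A.
have Horb : forall y, exists j, y = a (j, false) x.
  move=> y; have : closure [set a g y | g in [set: Dinf]] x by rewrite Mn.
  move=> /(_ _ (open_nbhs_nbhs (conj oU Ux))) [_ [[g _ <-] Ug]].
  have := U1 _ Ug => /(congr1 (a (dinv g))); rewrite act_invK // => ->.
  by have := orbit_fixed A Hx (dinv g).
have [n Hn] : exists n, forall z, exists2 j : int, (`|j| <= n)%N & z = a (j, false) x.
  apply: (cover_nat cX) => y; have [j ->] := Horb y.
  exists `|j|%N; exists (a (dinv (j, false)) @^-1` U).
    apply: open_nbhs_nbhs; split; first by apply: open_pre => //; case: A => _ [].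
    by rewrite /= act_invK.
  move=> z m /U1 Ez Hm; exists j => //.
  by rewrite -Ez act_Kinv.
apply: Inf.
pose f := fun p : 'I_n.+1 * bool => a ((if p.2 then - (p.1 : nat)%:Z else (p.1 : nat)%:Z), false) x.
apply: (@sub_finite_set _ _ (range f)); last exact/finite_image/finite_finset.
move=> z _; have [j Hj' ->] := Hn z.
have Hlt : (`|j| < n.+1)%N by [].
exists (Ordinal Hlt, j < 0) => //; rewrite /f /=; congr (a (_, _) x).
by case: (ltrP j 0) => Hj0; lia.
Qed.

Lemma not_closure (X : topologicalType) (A : set X) y :
  ~ closure A y -> exists2 B, nbhs y B & forall z, B z -> ~ A z.
Proof.
move=> /existsNP [B /not_implyP [HB HAB]]; exists B => // z Bz Az.
by apply: HAB; exists z.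
Qed.

Lemma baire_step (X : topologicalType) (F : set X) : compact [set: X] ->
  hausdorff_space X -> closed F -> (forall U, open U -> U `<=` F -> U = set0) ->
  forall V : set X, open V -> V !=set0 ->
  exists V' : set X, [/\ open V', V' !=set0 & closure V' `<=` V `\` F].
Proof.
move=> cX hX cF nF V oV [z0 Vz0].
have oVF : open (V `\` F) by apply: openI => //; apply: closed_openC.
have [z [Vz nFz]] : (V `\` F) !=set0.
  apply: contrapT => H; have VF : V `<=` F.
    move=> v Vv; apply: contrapT => nv; apply: H; by exists v.
  by have := nF V oV VF => E; rewrite E in Vz0.
have [B Bz cB] := compact_regular hX cX (@filterT _ (nbhs z) _) (open_nbhs_nbhs (conj oVF (conj Vz nFz))).
exists B°; split; first exact: open_interior.
  by exists z.
by apply: subset_trans cB; apply: closureS; apply: interior_subset.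
Qed.

Lemma baire (X : topologicalType) (F : nat -> set X) : compact [set: X] ->
  hausdorff_space X -> (forall n, closed (F n)) ->
  (forall n U, open U -> U `<=` F n -> U = set0) ->
  forall (x : X) W, nbhs x W -> exists2 y, W y & forall n, ~ F n y.
Proof.
move=> cX hX cF nF x W Wx.
have Hs : forall n (V : set X), exists V' : set X,
    (open V /\ V !=set0) -> [/\ open V', V' !=set0 & closure V' `<=` V `\` F n].
  move=> n V; case: (pselect (open V /\ V !=set0)) => [[oV nV]|H].
    by have [V' HV'] := baire_step cX hX (cF n) (nF n) oV nV; exists V'.
  by exists set0.
pose S n V := proj1_sig (cid (Hs n V)).
have SP n V : (open V /\ V !=set0) -> [/\ open (S n V), S n V !=set0 & closure (S n V) `<=` V `\` F n].
  exact: (proj2_sig (cid (Hs n V))).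
pose fix Vs n := if n is m.+1 then S m (Vs m) else W°.
have HV : forall n, open (Vs n) /\ Vs n !=set0.
  elim=> [|n [oV nV]] /=; first by split; [exact: open_interior | exists x].
  by have [? ? _] := SP n _ (conj oV nV).
have Hcl : forall n, closure (Vs n.+1) `<=` Vs n `\` F n.
  by move=> n; have [_ _] := SP n _ (HV n).
have Hdec : forall n m, (n <= m)%N -> Vs m `<=` Vs n.
  move=> n m /subnK <-; elim: (m - n)%N => // k IH.
  rewrite addSn => z Hz; apply: IH.
  by have := Hcl (k + n)%N z (subset_closure Hz) => - [].
have [y Hy] : exists y, forall n, closure (Vs n.+1) y.
  apply: contrapT => H.
  have H' : forall y, exists n, ~ closure (Vs n.+1) y.
    move=> y; apply: contrapT => Hn; apply: H; exists y => n.
    by apply: contrapT => Hc; apply: Hn; exists n.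
  have [N HN] : exists N, forall y, ~ Vs N y.
    apply: (cover_nat cX) => z; have [n Hn] := H' z.
    have [B Bz HB] := not_closure Hn.
    exists n.+1; exists B => // w m Bw Hm Vw.
    by apply: (HB w Bw); apply: (Hdec _ _ Hm).
  by have [_ [y0 Hy0]] := HV N; apply: (HN y0).
exists y.
  by have [+ _] := Hcl 0%N y (Hy 0%N) => /= /interior_subset.
by move=> n Fy; have [_] := Hcl n y (Hy n).
Qed.

Lemma closed_fix (X : topologicalType) (f : X -> X) : hausdorff_space X ->
  continuous f -> closed [set y | f y = y].
Proof.
move=> hX fc y Hy; apply: hX => A B HA HB /=.
have HB' : nbhs y (B `&` f @^-1` A) by apply: filterI => //; exact: fc.
have [z [/= fz [Bz Az]]] := Hy _ HB'.
by exists z; split => //; rewrite -fz.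
Qed.

Definition nowhere (X : topologicalType) (A : set X) :=
  forall U, open U -> U `<=` A -> U = set0.

Lemma nowhereU (X : topologicalType) (A B : set X) : closed A ->
  nowhere A -> nowhere B -> nowhere (A `|` B).
Proof.
move=> cA nA nB U oU HU.
have oU' : open (U `\` A) by apply: openI => //; apply: closed_openC.
have E : U `\` A = set0.
  by apply: (nB _ oU') => z [Uz nAz]; case: (HU z Uz).
apply: (nA _ oU) => z Uz; apply: contrapT => nz.
by have : (U `\` A) z by []; rewrite E.
Qed.

Definition zn (n : nat) : int := if odd n then Negz n./2 else Posz n./2.

Lemma zn_surj k : exists n, zn n = k.
Proof.
case: k => m; [exists m.*2 | exists m.*2.+1]; rewrite /zn.
  by rewrite odd_double doubleK.
by rewrite /= odd_double /= uphalf_double.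
Qed.

Lemma good_dense (X : topologicalType) (alpha beta : Dinf -> X -> X) (phi psi : X -> X) :
  compact [set: X] -> hausdorff_space X -> infinite_set [set: X] ->
  is_cont_action alpha -> is_cont_action beta ->
  minimal_action alpha -> minimal_action beta ->
  continuous phi -> continuous psi -> cancel phi psi -> cancel psi phi ->
  forall (x : X) W, nbhs x W -> exists2 y, W y &
    (forall g, alpha g y = y -> g = d1) /\ (forall h, beta h (phi y) = phi y -> h = d1).
Proof.
move=> cX hX Inf Aa Ab Ma Mb phic psic phiK psiK x W Wx.
pose F n := [set y | alpha (zn n, true) y = y] `|`
            phi @^-1` [set z | beta (zn n, true) z = z].
have cFa n : closed [set y | alpha (zn n, true) y = y].
  by apply: closed_fix => //; case: Aa => _ [].
have cFb n : closed (phi @^-1` [set z | beta (zn n, true) z = z]).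
  apply: ((continuous_closedP phi).1 phic); apply: closed_fix => //.
  by case: Ab => _ [].
have cF n : closed (F n) by apply: closedU.
have nF n : nowhere (F n).
  apply: nowhereU => //.
    by move=> U oU HU; apply: (fix_nowhere Aa) => //; exact: HU.
  move=> U oU HU.
  have E : psi @^-1` U = set0.
    apply: (fix_nowhere Ab cX hX Mb Inf (k := zn n)).
      by apply: open_pre.
    by move=> z /HU /=; rewrite psiK.
  apply/eqP/negPn/negP => /set0P [u Uu].
  have : (psi @^-1` U) (phi u) by rewrite /= phiK.
  by rewrite E.
have [y Wy Hy] := baire cX hX cF nF Wx.
exists y => //; split.
  case=> k [] Hk; last first.
    by rewrite (sfree Aa hX Ma Inf Hk).
  have [n En] := zn_surj k; exfalso; apply: (Hy n); left; by rewrite /= En.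
case=> k [] Hk; last first.
  by rewrite (sfree Ab hX Mb Inf Hk).
have [n En] := zn_surj k; exfalso; apply: (Hy n); right; by rewrite /= En.
Qed.

Lemma cocycle1 (X : topologicalType) (alpha : Dinf -> X -> X) (c : Dinf -> X -> Dinf) :
  is_cont_action alpha ->
  (forall g1 g2 x, c (dmul g1 g2) x = dmul (c g1 (alpha g2 x)) (c g2 x)) ->
  forall x, c d1 x = d1.
Proof.
move=> [a1 _] Hc x; have := Hc d1 d1 x; rewrite a1 dmulg1 => E.
by apply: (@dmul_injr (c d1 x)); rewrite /= -E dmul1g.
Qed.

Lemma good_map_at (X : topologicalType) (alpha beta : Dinf -> X -> X)
  (phi psi : X -> X) (c b : Dinf -> X -> Dinf) (L : nat) :
  is_cont_action alpha -> is_cont_action beta -> cancel phi psi -> cancel psi phi ->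
  (forall g x, phi (alpha g x) = beta (c g x) (phi x)) ->
  (forall h y, psi (beta h y) = alpha (b h y) (psi y)) ->
  (forall g1 g2 x, c (dmul g1 g2) x = dmul (c g1 (alpha g2 x)) (c g2 x)) ->
  (0 < L)%N ->
  (forall y, `|(c ds y).1| <= L)%N -> (forall y, `|(c dt y).1| <= L)%N ->
  (forall a y, `|(b (gen_val a) y).1| <= L)%N ->
  forall x, (forall g, alpha g x = x -> g = d1) ->
  (forall h, beta h (phi x) = phi x -> h = d1) ->
  good_map L (fun g => c g x).
Proof.
move=> Aa Ab phiK psiK Hphi Hpsi Hc L0 Bs Bt Bb x fa fb.
set th := fun g => c g x.
have thi : injective th.
  move=> g g' E; have : phi (alpha g x) = phi (alpha g' x).
    by rewrite !Hphi; move: E; rewrite /th => ->.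
  move=> /(can_inj phiK) E'.
  have : alpha (dmul (dinv g') g) x = x.
    by rewrite -(act_comp Aa) E' act_invK.
  move=> /fa E2; apply: (@dmul_inj (dinv g')); by rewrite E2 dmulVg.
have ths : forall y, exists g, th g = y.
  move=> h; exists (b h (phi x)).
  have E : beta (th (b h (phi x))) (phi x) = beta h (phi x).
    by rewrite /th -Hphi -[X in alpha _ X]phiK -Hpsi psiK.
  have : beta (dmul (dinv h) (th (b h (phi x)))) (phi x) = phi x.
    by rewrite -(act_comp Ab) E act_invK.
  move=> /fb E2; apply: (@dmul_inj (dinv h)); by rewrite E2 dmulVg.
split; last first.
  split=> //; rewrite /qf /th (_ : (0, false) = d1) //.
  by rewrite (cocycle1 Aa Hc).
split => //.
- case=> m e; rewrite /qf /th; case: e; last by rewrite subrr normr0.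
  rewrite [kap (m, true)]/kap /=.
  have -> : (m, true) = dmul dt (- m, false) by rewrite /dmul /= opprK add0r.
  rewrite Hc; have := kap_mul (c dt (alpha (- m, false) x)) (c (- m, false) x).
  have := Bt (alpha (- m, false) x).
  set u := kap _; set v := kap _; set w := (c dt _).1; clearbody u v w; lia.
- move=> n; rewrite /qf /th.
  have -> : (n + 1, false) = dmul ds (n, false) by rewrite /dmul /= addrC.
  rewrite Hc; have := kap_mul (c ds (alpha (n, false) x)) (c (n, false) x).
  have := Bs (alpha (n, false) x).
  set u := kap _; set v := kap _; set w := (c ds _).1; clearbody u v w; lia.
have afree : forall g g', alpha g x = alpha g' x -> g = g'.
  move=> g g' E; have : alpha (dmul (dinv g') g) x = x.
    by rewrite -(act_comp Aa) E act_invK.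
  move=> /fa E2; apply: (@dmul_inj (dinv g')); by rewrite E2 dmulVg.
have HW : forall ws g1 g2, th g2 = dmul (eval_word ws) (th g1) ->
    `|kap g2 - kap g1| <= (L * size ws)%N%:Z.
  elim=> [|a ws IH] g1 g2 /=.
    by rewrite dmul1g => /thi ->; rewrite subrr normr0.
  rewrite -dmulA => E.
  have [g' Eg'] := ths (dmul (eval_word ws) (th g1)).
  have := IH g1 g' Eg'.
  set bb := b (gen_val a) (phi (alpha g' x)).
  have Eg2 : g2 = dmul bb g'.
    have Ec : th g2 = dmul (gen_val a) (th g') by rewrite E Eg'.
    rewrite /th in Ec.
    apply: afree; rewrite -(act_comp Aa) -[LHS]phiK Hphi Ec.
    by rewrite -(act_comp Ab) -Hphi Hpsi phiK.
  have := kap_mul bb g'; rewrite -Eg2; have := Bb a (phi (alpha g' x)); rewrite -/bb.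
  rewrite mulnS; set u := kap g2; set v := kap g'; set w := kap g1.
  set z := bb.1; set y := (L * size ws)%N; clearbody u v w z y; lia.
move=> g1 g2; set w := dmul (th g2) (dinv (th g1)).
have [ws [Hs He]] := word_size w.
have := HW ws g1 g2; rewrite He /w -dmulA dmulVg dmulg1 => /(_ erefl).
have := kap_diff (th g1) (th g2); rewrite -/w Hs /pot => Hd H.
apply: (le_trans H); rewrite PoszM; apply: ler_wpM2l => //.
move: Hd; case: (w.2) => /=; lia.
Qed.

Lemma dm_plus (g : Dinf) n : dmetric g (dspow n) = (`|(n - kap g)%R|%N + g.2)%N.
Proof. by rewrite dmetricE /kap /dspow /= addbF. Qed.

Lemma dm_minus (g : Dinf) n : dmetric g (dspow (- n)%R) = (`|(- n - kap g)%R|%N + g.2)%N.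
Proof. by rewrite dmetricE /kap /dspow /= addbF. Qed.

End Helpers9.
Import Helpers9.

Theorem mainTheorem9 (X : topologicalType)
  (alpha beta : Dinf -> X -> X)
  (phi psi : X -> X) (c b : Dinf -> X -> Dinf) :
  compact [set: X] -> hausdorff_space X -> infinite_set [set: X] ->
  is_cont_action alpha -> is_cont_action beta ->
  minimal_action alpha -> minimal_action beta ->
  (* continuous orbit equivalence *)
  continuous phi -> continuous psi ->
  cancel phi psi -> cancel psi phi ->
  cont_DX c -> cont_DX b ->
  (forall g x, phi (alpha g x) = beta (c g x) (phi x)) ->
  (forall h y, psi (beta h y) = alpha (b h y) (psi y)) ->
  (* c is a cocycle *)
  (forall g1 g2 x, c (dmul g1 g2) x = dmul (c g1 (alpha g2 x)) (c g2 x)) ->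
  let Xplus := [set x | exists M : nat, forall n : int,
                  (dmetric (c (dspow n) x) (dspow n) <= M)%N] in
  let Xminus := [set x | exists M : nat, forall n : int,
                  (dmetric (c (dspow n) x) (dspow (- n)%R) <= M)%N] in
  [/\ [set: X] = Xplus `|` Xminus, Xplus `&` Xminus = set0,
      open Xplus /\ closed Xplus & open Xminus /\ closed Xminus].
Proof.
move=> cX hX Inf Aa Ab Ma Mb phic psic phiK psiK cc cb Hphi Hpsi Hc Xplus Xminus.
have [Ns Hs] := loc_bound cX (cc ds).
have [Nt Ht] := loc_bound cX (cc dt).
have [N1 H1] := loc_bound cX (cb (gen_val GS)).
have [N2 H2] := loc_bound cX (cb (gen_val GSinv)).
have [N3 H3] := loc_bound cX (cb (gen_val GT)).
pose L := (Ns + Nt + N1 + N2 + N3).+1.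
have L0 : (0 < L)%N by [].
have Bs : forall y, (`|(c ds y).1| <= L)%N by move=> y; have := Hs y; lia.
have Bt : forall y, (`|(c dt y).1| <= L)%N by move=> y; have := Ht y; lia.
have Bb : forall a y, (`|(b (gen_val a) y).1| <= L)%N.
  by case=> y; [have := H1 y | have := H2 y | have := H3 y]; lia.
pose M := Mc L.
pose q x n := qf (fun g => c g x) n.
have Hgood : forall x, (forall g, alpha g x = x -> g = d1) ->
    (forall h, beta h (phi x) = phi x -> h = d1) ->
    (forall n, (`|q x n - n| <= M%:Z)%R) \/ (forall n, (`|q x n + n| <= M%:Z)%R).
  move=> x fa fb; apply: core_all.
  exact: (good_map_at Aa Ab phiK psiK Hphi Hpsi Hc L0 Bs Bt Bb fa fb).
pose Nz : int := (M + 1)%:Z.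
have Hall : forall x n, ((0 < q x Nz)%R -> (`|q x n - n| <= M%:Z)%R) /\
                        (~ (0 < q x Nz)%R -> (`|q x n + n| <= M%:Z)%R).
  move=> x n.
  have HU : nbhs x ([set y | c (Nz, false) y = c (Nz, false) x] `&`
                    [set y | c (n, false) y = c (n, false) x]).
    by apply: filterI; apply: cc.
  have [y [/= E1 E2] [fa fb]] := good_dense cX hX Inf Aa Ab Ma Mb phic psic phiK psiK HU.
  have Q1 : q y Nz = q x Nz by rewrite /q /qf /= E1.
  have Q2 : q y n = q x n by rewrite /q /qf /= E2.
  have [G|G] := Hgood y fa fb; have G1 := G Nz; have G2 := G n;
    rewrite Q1 Q2 in G1 G2; split => H //; exfalso; move: H G1; rewrite /Nz; lia.
have qE : forall x n, q x n = kap (c (dspow n) x) by [].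
have Pmem : forall x, Xplus x <-> (0 < q x Nz)%R.
  move=> x; split.
    move=> [M1 HM1]; apply: contrapT => H.
    pose n : int := (M1 + M + 1)%:Z.
    have := HM1 n; rewrite dm_plus -qE; have := (Hall x n).2 H.
    rewrite /n; case: (c _ _).2; lia.
  move=> H; exists M.+1 => n; rewrite dm_plus -qE; have := (Hall x n).1 H.
  case: (c _ _).2; lia.
have Mmem : forall x, Xminus x <-> ~ (0 < q x Nz)%R.
  move=> x; split.
    move=> [M2 HM2] H.
    pose n : int := (M2 + M + 1)%:Z.
    have := HM2 n; rewrite dm_minus -qE; have := (Hall x n).1 H.
    rewrite /n; case: (c _ _).2; lia.
  move=> H; exists M.+1 => n; rewrite dm_minus -qE; have := (Hall x n).2 H.
  case: (c _ _).2; lia.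
have oP : open Xplus.
  rewrite openE => x /Pmem Hx.
  apply: filterS (cc (Nz, false) x) => y /= Ey; apply/Pmem.
  by rewrite /q /qf /= Ey.
have oM : open Xminus.
  rewrite openE => x /Mmem Hx.
  apply: filterS (cc (Nz, false) x) => y /= Ey; apply/Mmem.
  by rewrite /q /qf /= Ey.
have EP : Xplus = ~` Xminus.
  apply/seteqP; split => x /=.
    by move=> /Pmem H /Mmem.
  by move=> H; apply/Pmem; apply: contrapT => H'; apply: H; apply/Mmem.
have EM : Xminus = ~` Xplus.
  by rewrite EP setCK.
split.
- apply/seteqP; split => x // _.
  case: (pselect (0 < q x Nz)%R) => H; [left; apply/Pmem | right; apply/Mmem] => //.
- apply/seteqP; split => x // [/Pmem K1 /Mmem K2]; exact: K2 K1.
- by split => //; rewrite EP; apply: open_closedC.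
- by split => //; rewrite EM; apply: open_closedC.
Qed.
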